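(* Let $\Gamma$ be a single-player extensive-form game. For each leaf $z\in\mathcal Z$, $$\frac{1}{\alpha(z)}\le\prod_{I\in\mathcal I_1:\,n_z(I)>1}\min(n_z(I),|A_I|)^{n_z(I)}.$$
   Context: A single-player extensive-form game consists of a finite rooted tree (leaves $\mathcal Z$), nonterminal nodes belonging to Player 1 or chance, and a partition $\mathcal I_1$ of Player 1's nodes into infosets with common action sets $A_I$. For $z\in\mathcal Z$ with root-to-$z$ path $(h_0,\dots,h_{d-1})$, let $I_k$ be the infoset of $h_k$ (for Player 1's nodes) and $a_k$ the action taken at $h_k$. For $I\in\mathcal I_1$ and $a\in A_I$: $n_z(I)=|\{k:I_k=I\}|$, $n_z(a)=|\{k:I_k=I,a_k=a\}|$, $p_z(a)=n_z(a)/n_z(I)$, and the absentmindedness coefficient is $\alpha(z)=\prod_{I\in\mathcal I_1:n_z(I)>1}\prod_{a\in A_I:n_z(a)>0}p_z(a)^{n_z(a)}$. *)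

(* Defs.v *)
From HB Require Import structures.
From mathcomp Require Import all_boot all_order all_algebra.
Set Implicit Arguments. Unset Strict Implicit. Unset Printing Implicit Defensive.
Import Order.TTheory GRing.Theory Num.Theory.

(* A single-player extensive-form game on a finite rooted tree.
   - [Node] : the finite set of nodes, [root] the root, [par x] the parent of x
     ([None] only at the root).
   - [isP1 h] : h is a node of Player 1; other nonterminal nodes are chance nodes.
   - [info h] : the infoset of a Player-1 node h (meaningless for other nodes).
   - [A I]   : the common action set of infoset I.
   - [lab c] : the action labelling the edge from [par c] to c. *)
Record game := Game {
  Node : finType;
  Info : finType;
  Act : finType;
  root : Node;
  par : Node -> option Node;
  isP1 : pred Node;
  info : Node -> Info;
  A : Info -> {set Act};
  lab : Node -> Act
}.

Definition is_leaf (G : game) (z : Node G) : Prop :=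
  forall c : Node G, par c <> Some z.

Definition well_formed (G : game) : Prop :=
  par (root G) = None /\
      (forall x : Node G, x <> root G -> par x <> None) /\
      (* every node reaches the root: the parent relation is a rooted tree *)
      (forall x : Node G, exists n, iter n (obind (@par G)) (Some x) = Some (root G)) /\
      (forall h : Node G, isP1 h -> ~ is_leaf h) /\
      (forall h c : Node G, isP1 h -> par c = Some h -> lab c \in A (info h)) /\
      (forall h c c' : Node G, isP1 h -> par c = Some h -> par c' = Some h ->
          lab c = lab c' -> c = c') /\
      (forall (h : Node G) (a : Act G), isP1 h -> a \in A (info h) ->
          exists c, par c = Some h /\ lab c = a).

Fixpoint ancs (G : game) (fuel : nat) (x : Node G) : seq (Node G * Node G) :=
  match fuel with
  | 0 => [::]
  | f.+1 => match par x with
            | None => [::]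
            | Some p => (p, x) :: ancs f p
            end
  end.

(* The (infoset, action) pairs (I_k, a_k) at Player-1 nodes on the root-to-z path.
   A path in the tree has at most #|Node| - 1 edges, so fuel #|Node| suffices. *)
Definition p1_hist (G : game) (z : Node G) : seq (Info G * Act G) :=
  [seq (info e.1, lab e.2) | e <- ancs #|Node G| z & isP1 e.1].

Definition n_I (G : game) (z : Node G) (I : Info G) : nat :=
  count (fun q => q.1 == I) (p1_hist z).

Definition n_a (G : game) (z : Node G) (I : Info G) (a : Act G) : nat :=
  count (pred1 (I, a)) (p1_hist z).

Definition p_a (R : realFieldType) (G : game) (z : Node G) (I : Info G) (a : Act G) : R :=
  ((n_a z I a)%:R / (n_I z I)%:R)%R.

Definition alpha (R : realFieldType) (G : game) (z : Node G) : R :=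
  (\prod_(I : Info G | (1 < n_I z I)%N)
     \prod_(a in A I | (0 < n_a z I a)%N) (p_a R z I a) ^+ (n_a z I a))%R.

(* Main.v *)
Require Import Defs.
From mathcomp Require Import all_boot all_order all_algebra.
Import Order.TTheory GRing.Theory Num.Theory.
Set Implicit Arguments. Unset Strict Implicit.

Section Aux.
Local Open Scope ring_scope.

Lemma amgm_seq (R : realFieldType) (l : seq R) :
  all (fun x => 0 <= x) l ->
  \prod_(x <- l) x <= ((\sum_(x <- l) x) / (size l)%:R) ^+ size l.
Proof.
move=> /allP Hl.
have := @leif_AGM R 'I_(size l) predT (fun i => nth 0 l i).
rewrite cardT size_enum_ord => /= H.
rewrite (big_nth 0) (big_nth 0 _ (fun x => x)) !big_mkord.
apply: (H _).1 => i _; apply: Hl; exact: mem_nth.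
Qed.

Lemma wamgm (R : realFieldType) (T : eqType) (r : seq T) (w : T -> nat) (y : T -> R) :
  (forall t, t \in r -> 0 <= y t) ->
  \prod_(t <- r) y t ^+ w t <=
   ((\sum_(t <- r) (w t)%:R * y t) / (\sum_(t <- r) w t)%N%:R) ^+ (\sum_(t <- r) w t)%N.
Proof.
move=> Hy.
set l := flatten [seq nseq (w t) (y t) | t <- r].
have Hp : \prod_(x <- l) x = \prod_(t <- r) y t ^+ w t.
  rewrite big_flatten big_map; apply: eq_bigr => t _; rewrite big_nseq.
  by elim: (w t) => //= n ->; rewrite exprS.
have Hs : \sum_(x <- l) x = \sum_(t <- r) (w t)%:R * y t.
  rewrite big_flatten big_map; apply: eq_bigr => t _; rewrite big_nseq mulr_natl.
  by elim: (w t) => //= n ->; rewrite mulrS.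
have Hz : size l = (\sum_(t <- r) w t)%N.
  rewrite /l; elim: r {Hy l Hp Hs} => [|t r IH]; first by rewrite big_nil.
  by rewrite /= size_cat size_nseq IH big_cons.
rewrite -Hp -Hs -Hz; apply: amgm_seq.
apply/allP => x /flattenP [s /mapP [t tr ->]] /nseqP [-> _]; exact: Hy.
Qed.
End Aux.

Lemma ancs_par (G : game) f (x : Node G) e : e \in ancs f x -> par e.2 = Some e.1.
Proof.
elim: f x => [|f IH] x //=; case Hp: (par x) => [p|] //.
by rewrite inE => /orP [/eqP -> //| /IH].
Qed.

Lemma hist_in_A (G : game) (z : Node G) : well_formed G ->
  forall q, q \in p1_hist z -> q.2 \in A q.1.
Proof.
move=> [_ [_ [_ [_ [HA _]]]]] q /mapP [e]; rewrite mem_filter => /andP [H1 H2] ->.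
exact: (HA _ _ H1 (ancs_par H2)).
Qed.

Lemma sum_count (I' : eqType) (T : finType) (h : seq (I' * T)) (I : I') (B : pred T) :
  (\sum_(a | B a) count (pred1 (I, a)) h = count (fun q => (q.1 == I) && B q.2) h)%N.
Proof.
elim: h => [|q h IH]; first by rewrite big1.
rewrite /= big_split /= IH; congr (_ + _)%N.
case: q => I1 a1 /=; case: (I1 =P I) => [->|ne]; last first.
  by rewrite big1 // => a _; rewrite xpair_eqE; case: (I1 =P I).
rewrite (eq_bigr (fun a => nat_of_bool (a1 == a))); last by move=> a _; rewrite xpair_eqE eqxx.
case Ba: (B a1).
  rewrite (bigD1 a1) // eqxx big1 // => a /andP [_ /negbTE]; by rewrite eq_sym => ->.
by rewrite big1 // => a Ba'; case: (a1 =P a) => // E; rewrite E Ba' in Ba.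
Qed.

Lemma sum_na (G : game) (z : Node G) (I : Info G) : well_formed G ->
  (\sum_(a in A I | (0 < n_a z I a)%N) n_a z I a = n_I z I)%N.
Proof.
move=> wf; rewrite /n_a sum_count /n_I; apply: eq_in_count => q qh /=.
case: (q.1 =P I) => //= E.
subst I; rewrite (hist_in_A wf qh) /= -has_count; apply/hasP; exists q => //.
by rewrite /= -surjective_pairing.
Qed.

Section PerI.
Local Open Scope ring_scope.
Lemma perI (R : realFieldType) (G : game) (z : Node G) (I : Info G) :
  well_formed G -> (1 < n_I z I)%N ->
  (\prod_(a in A I | (0 < n_a z I a)%N) (p_a R z I a) ^+ n_a z I a)^-1
   <= ((minn (n_I z I) #|A I|)%:R)^+ n_I z I.
Proof.
move=> wf n1; have Hs := sum_na z I wf.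
set n := n_I z I in n1 Hs *.
rewrite -prodfV.
under eq_bigr => a /andP [_ Ha] do rewrite -exprVn /p_a invf_div.
rewrite -big_filter; apply: le_trans; first apply: wamgm.
  by move=> a _; rewrite divr_ge0 ?ler0n.
rewrite !big_filter Hs.
rewrite (eq_bigr (fun _ => n%:R)); last first.
  by move=> a /andP [_ Ha]; rewrite mulrC divfK // pnatr_eq0 -lt0n.
rewrite sumr_const.
set k := #|_|.
rewrite -[_ *+ k]mulr_natr mulrC mulKf; last by rewrite pnatr_eq0 -lt0n ltnW.
rewrite -!natrX ler_nat.
rewrite leq_exp2r ?(ltnW n1) // leq_min; apply/andP; split.
  rewrite -Hs /k -sum1_card; apply: leq_sum => a /andP [].
  done.
by apply: subset_leq_card; apply/subsetP => a /andP [].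
Qed.
End PerI.

Theorem proposition11 (R : realFieldType) (G : game) (z : Node G) :
  well_formed G -> is_leaf z ->
  ((alpha R z)^-1 <=
     \prod_(I : Info G | (1 < n_I z I)%N) ((minn (n_I z I) #|A I|)%:R) ^+ (n_I z I))%R.
Proof.
move=> wf _; rewrite /alpha -prodfV; apply: ler_prod => I HI; apply/andP; split.
  rewrite invr_ge0 prodr_ge0 // => a _; rewrite exprn_ge0 // /p_a divr_ge0 ?ler0n //.
exact: perI.
Qed.
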